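(* Let $G$ be a group. For every positive integer $n$, $\bar\lambda_n(G) = N_{n,1}(G)$.
   Context: $\gamma_1(G) = G$, $\gamma_{j+1}(G) = [\gamma_j(G), G]$. For a subgroup $H$ and integer $m$, $H^m$ is the subgroup generated by all $m$-th powers. The $\bar\lambda$-series is $\bar\lambda_1(G) = G$, $\bar\lambda_{n+1}(G) = \bar\lambda_n(G)^4[\bar\lambda_n(G), G]$. For $1 \le k \le n$, $N_{n,k}(G) = \gamma_k(G)^{4^{n-k}}\gamma_{k+1}(G)^{4^{n-k-1}} \cdots \gamma_n(G)$; in particular $N_{n,1}(G) = G^{4^{n-1}}\gamma_2(G)^{4^{n-2}}\cdots\gamma_n(G)$. *)

(* Defs.v *)
From Stdlib Require Import List.
Import ListNotations.

Record group := Group {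
  carrier :> Type;
  gmul : carrier -> carrier -> carrier;
  gone : carrier;
  ginv : carrier -> carrier;
  gmulA : forall x y z, gmul x (gmul y z) = gmul (gmul x y) z;
  gmul1 : forall x, gmul gone x = x;
  gmulV : forall x, gmul (ginv x) x = gone
}.

Arguments gmul {g}. Arguments gone {g}. Arguments ginv {g}.

Section GroupDefs.
Variable G : group.

Definition gset := G -> Prop.

Fixpoint gpow (x : G) (m : nat) : G :=
  match m with 0 => gone | S k => gmul x (gpow x k) end.

Definition gcomm (x y : G) : G := gmul (ginv x) (gmul (ginv y) (gmul x y)).

Definition is_subgroup (H : gset) : Prop :=
  H gone /\ (forall x y, H x -> H y -> H (gmul x y)) /\ (forall x, H x -> H (ginv x)).

Definition gen (S : gset) : gset :=
  fun x => forall H, is_subgroup H -> (forall y, S y -> H y) -> H x.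

Definition fullset : gset := fun _ => True.
Definition oneset : gset := fun x => x = gone.

Definition commsub (H K : gset) : gset :=
  gen (fun x => exists h k, H h /\ K k /\ x = gcomm h k).

Definition powsub (H : gset) (m : nat) : gset :=
  gen (fun x => exists h, H h /\ x = gpow h m).

Definition prodset (H K : gset) : gset :=
  fun x => exists h k, H h /\ K k /\ x = gmul h k.

(* lower central series, 1-indexed: gamma 1 = G, gamma (j+1) = [gamma j, G];
   (gamma 0 := G is an irrelevant convention) *)
Fixpoint gamma (j : nat) : gset :=
  match j with
  | 0 => fullset
  | 1 => fullset
  | S k => commsub (gamma k) fullset
  end.

Fixpoint lambda_bar (j : nat) : gset :=
  match j with
  | 0 => fullset
  | 1 => fullset
  | S k => prodset (powsub (lambda_bar k) 4) (commsub (lambda_bar k) fullset)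
  end.

(* N_{n,k} = gamma_k^{4^(n-k)} gamma_{k+1}^{4^(n-k-1)} ... gamma_n^{4^0} *)
Definition N_nk (n k : nat) : gset :=
  fold_right (fun j acc => prodset (powsub (gamma j) (Nat.pow 4 (n - j))) acc)
             oneset (seq k (S n - k)).

End GroupDefs.

Arguments gamma {G}. Arguments lambda_bar {G}. Arguments N_nk {G}.

(* Main.v *)
Require Import Defs.
From Stdlib Require Import List Lia Arith.
Import ListNotations.

Section S.
Variable G : group.
Implicit Types x y z g : G.
Local Notation "x ⋅ y" := (@gmul G x y) (at level 40, left associativity).

Lemma mA x y z : x ⋅ (y ⋅ z) = x ⋅ y ⋅ z. Proof. apply gmulA. Qed.
Lemma mA' x y z : x ⋅ y ⋅ z = x ⋅ (y ⋅ z). Proof. symmetry; apply gmulA. Qed.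
Lemma m1l x : gone ⋅ x = x. Proof. apply gmul1. Qed.
Lemma mVl x : ginv x ⋅ x = gone. Proof. apply gmulV. Qed.
Lemma mVr x : x ⋅ ginv x = gone.
Proof. rewrite <- (m1l (x ⋅ ginv x)). rewrite <- (mVl (ginv x)) at 1.
  rewrite <- mA, (mA (ginv x)), mVl, m1l. apply mVl. Qed.
Lemma m1r x : x ⋅ gone = x.
Proof. rewrite <- (mVl x), mA, mVr, m1l. reflexivity. Qed.
Lemma mKV x y : ginv x ⋅ (x ⋅ y) = y. Proof. rewrite mA, mVl, m1l. reflexivity. Qed.
Lemma mVK x y : x ⋅ (ginv x ⋅ y) = y. Proof. rewrite mA, mVr, m1l. reflexivity. Qed.
Lemma inv_uniq x y : x ⋅ y = gone -> ginv x = y.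
Proof. intro H. rewrite <- (m1r (ginv x)), <- H, mKV. reflexivity. Qed.
Lemma invK x : ginv (ginv x) = x. Proof. apply inv_uniq, mVl. Qed.
Lemma invM x y : ginv (x ⋅ y) = ginv y ⋅ ginv x.
Proof. apply inv_uniq. rewrite <- mA, mVK, mVr. reflexivity. Qed.
Lemma inv1 : ginv (@gone G) = gone. Proof. apply inv_uniq, m1l. Qed.

Ltac gs := repeat (first [rewrite invM | rewrite invK | rewrite inv1 | rewrite mA'
  | rewrite mKV | rewrite mVK | rewrite m1l | rewrite m1r | rewrite mVl | rewrite mVr]).

Definition cj x g := ginv g ⋅ (x ⋅ g).

Lemma cj_mul x y g : cj (x ⋅ y) g = cj x g ⋅ cj y g. Proof. unfold cj; gs; reflexivity. Qed.
Lemma cj_inv x g : cj (ginv x) g = ginv (cj x g). Proof. unfold cj; gs; reflexivity. Qed.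
Lemma cj_comm x y g : cj (gcomm G x y) g = gcomm G (cj x g) (cj y g).
Proof. unfold cj, gcomm; gs; reflexivity. Qed.
Lemma cj_pow x g m : cj (gpow G x m) g = gpow G (cj x g) m.
Proof. induction m; simpl. unfold cj; gs; reflexivity. rewrite cj_mul, IHm; reflexivity. Qed.

Lemma pow_add x a b : gpow G x (a + b) = gpow G x a ⋅ gpow G x b.
Proof. induction a; simpl. gs; reflexivity. rewrite IHa; gs; reflexivity. Qed.
Lemma pow_mul x a b : gpow G x (a * b) = gpow G (gpow G x b) a.
Proof. induction a; simpl. reflexivity. rewrite pow_add, IHa; reflexivity. Qed.
Lemma pow1 x : gpow G x 1 = x. Proof. simpl; gs; reflexivity. Qed.
Lemma pow_comm x m : x ⋅ gpow G x m = gpow G x m ⋅ x.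
Proof. induction m; simpl. gs; reflexivity. rewrite IHm at 1. gs; reflexivity. Qed.
Lemma pow_inv x m : gpow G (ginv x) m = ginv (gpow G x m).
Proof. induction m; simpl. gs; reflexivity. rewrite IHm, <- invM, pow_comm; reflexivity. Qed.
Lemma pow_one m : gpow G gone m = gone.
Proof. induction m; simpl. reflexivity. rewrite IHm; gs; reflexivity. Qed.

Definition incl (A B : gset G) := forall x, A x -> B x.
Definition normal (K : gset G) := is_subgroup G K /\ forall x g, K x -> K (cj x g).

Lemma sg1 H : is_subgroup G H -> H gone. Proof. intros [a _]; exact a. Qed.
Lemma sgM H x y : is_subgroup G H -> H x -> H y -> H (x ⋅ y).
Proof. intros [_ [b _]]; apply b. Qed.
Lemma sgV H x : is_subgroup G H -> H x -> H (ginv x).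
Proof. intros [_ [_ c]]; apply c. Qed.
Lemma sgP H x m : is_subgroup G H -> H x -> H (gpow G x m).
Proof. intros Hs Hx; induction m; simpl. apply sg1; auto. apply sgM; auto. Qed.

Lemma gen_sub S : is_subgroup G (gen G S).
Proof. unfold gen; split; [|split].
- intros H Hs _; apply sg1; auto.
- intros x y Hx Hy H Hs HS; apply sgM; auto; [apply Hx|apply Hy]; auto.
- intros x Hx H Hs HS; apply sgV; auto; apply Hx; auto. Qed.
Lemma gen_incl (S : gset G) x : S x -> gen G S x.
Proof. intros Sx H _ HS; auto. Qed.
Lemma gen_min (S H : gset G) : is_subgroup G H -> incl S H -> incl (gen G S) H.
Proof. intros Hs HS x Hx; apply Hx; auto. Qed.
Lemma gen_ext (S S' : gset G) : (forall x, S x <-> S' x) -> forall x, gen G S x <-> gen G S' x.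
Proof. intros E x; split; apply gen_min; try apply gen_sub; intros y Hy; apply gen_incl, E; auto. Qed.
Lemma gen_normal (S : gset G) : (forall x g, S x -> S (cj x g)) -> normal (gen G S).
Proof. intro HS; split. apply gen_sub. intros x g Hx.
  pose (H := fun y => gen G S (cj y g)).
  assert (Hs : is_subgroup G H).
  { unfold H; split; [|split].
    - unfold cj; gs; apply sg1, gen_sub.
    - intros a b Ha Hb; rewrite cj_mul; apply sgM; auto; apply gen_sub.
    - intros a Ha; rewrite cj_inv; apply sgV; auto; apply gen_sub. }
  apply (gen_min S H Hs); auto. intros y Hy; apply gen_incl, HS; auto. Qed.

Lemma prodset_sub H K : is_subgroup G H -> normal K -> is_subgroup G (prodset G H K).
Proof. intros Hs [Ks Kn]; split; [|split].
- exists gone, gone; split; [apply sg1; auto|split; [apply sg1; auto|gs; reflexivity]].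
- intros x y [h1 [k1 [H1 [K1 ->]]]] [h2 [k2 [H2 [K2 ->]]]].
  exists (h1 ⋅ h2), (cj k1 h2 ⋅ k2); repeat split. apply sgM; auto.
  apply sgM; auto. unfold cj; gs; reflexivity.
- intros x [h [k [Hh [Kk ->]]]]. exists (ginv h), (cj (ginv k) (ginv h)); repeat split.
  apply sgV; auto. apply Kn, sgV; auto. unfold cj; gs; reflexivity. Qed.

Lemma prodset_normal H K : normal H -> normal K -> normal (prodset G H K).
Proof. intros [Hs Hn] Kn; split. apply prodset_sub; auto.
  intros x g [h [k [Hh [Kk ->]]]]. exists (cj h g), (cj k g); repeat split; auto.
  apply Kn; auto. apply cj_mul. Qed.

Lemma full_normal : normal (fullset G).
Proof. split; [split; [|split]|]; unfold fullset; auto. Qed.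
Lemma one_normal : normal (oneset G).
Proof. unfold oneset; split; [split; [|split]|].
  reflexivity. intros x y -> ->; gs; reflexivity. intros x ->; gs; reflexivity.
  intros x g ->; unfold cj; gs; reflexivity. Qed.

Lemma powsub_sub H m : is_subgroup G (powsub G H m). Proof. apply gen_sub. Qed.
Lemma powsub_normal H m : normal H -> normal (powsub G H m).
Proof. intros [Hs Hn]; apply gen_normal. intros x g [h [Hh ->]].
  exists (cj h g); split; auto. apply cj_pow. Qed.
Lemma commsub_normal H : normal H -> normal (commsub G H (fullset G)).
Proof. intros [Hs Hn]; apply gen_normal. intros x g [h [k [Hh [_ ->]]]].
  exists (cj h g), (cj k g); repeat split; auto. apply cj_comm. Qed.
Lemma commsub_mono H H' : incl H H' -> incl (commsub G H (fullset G)) (commsub G H' (fullset G)).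
Proof. intros I; apply gen_min. apply gen_sub. intros x [h [k [Hh [Kk ->]]]].
  apply gen_incl. exists h, k; auto. Qed.

Lemma gamma_normal k : normal (@gamma G k).
Proof. induction k. apply full_normal. destruct k. apply full_normal.
  apply commsub_normal; auto. Qed.
Lemma gammaS k : 1 <= k -> @gamma G (S k) = commsub G (gamma k) (fullset G).
Proof. destruct k. lia. reflexivity. Qed.

Lemma comm_set_sub K : normal K -> is_subgroup G (fun x => forall g, K (gcomm G x g)).
Proof. intros [Ks Kn]; split; [|split].
- intro g; unfold gcomm; gs; apply sg1; auto.
- intros x y Hx Hy g.
  replace (gcomm G (x ⋅ y) g) with (cj (gcomm G x g) y ⋅ gcomm G y g)
    by (unfold cj, gcomm; gs; reflexivity).
  apply sgM; auto.
- intros x Hx g.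
  replace (gcomm G (ginv x) g) with (cj (ginv (gcomm G x g)) (ginv x))
    by (unfold cj, gcomm; gs; reflexivity).
  apply Kn, sgV; auto. Qed.

Definition cg (K : gset G) x y := K (ginv x ⋅ y).
Section Cong.
Variable K : gset G.
Hypothesis Kn : normal K.
Lemma cg_eq x y : x = y -> cg K x y.
Proof. intros ->; unfold cg; gs; apply sg1, Kn. Qed.
Lemma cg_sym x y : cg K x y -> cg K y x.
Proof. unfold cg; intro H. replace (ginv y ⋅ x) with (ginv (ginv x ⋅ y)) by (gs; reflexivity).
  apply sgV; auto; apply Kn. Qed.
Lemma cg_trans x y z : cg K x y -> cg K y z -> cg K x z.
Proof. unfold cg; intros H1 H2. replace (ginv x ⋅ z) with ((ginv x ⋅ y) ⋅ (ginv y ⋅ z)) by (gs; reflexivity).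
  apply sgM; auto; apply Kn. Qed.
Lemma cg_mul x x' y y' : cg K x x' -> cg K y y' -> cg K (x ⋅ y) (x' ⋅ y').
Proof. unfold cg; intros H1 H2.
  replace (ginv (x ⋅ y) ⋅ (x' ⋅ y')) with (cj (ginv x ⋅ x') y ⋅ (ginv y ⋅ y'))
    by (unfold cj; gs; reflexivity).
  apply sgM; auto. apply Kn. apply Kn; auto. Qed.
Lemma cg_pow a b : cg K (a ⋅ b) (b ⋅ a) ->
  forall m, cg K (gpow G (a ⋅ b) m) (gpow G a m ⋅ gpow G b m).
Proof. intros Hab.
  assert (L : forall m, cg K (b ⋅ gpow G a m) (gpow G a m ⋅ b)).
  { induction m; simpl. apply cg_eq; gs; reflexivity.
    eapply cg_trans. apply cg_eq; rewrite mA; reflexivity.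
    eapply cg_trans. apply cg_mul. apply cg_sym, Hab. apply cg_eq; reflexivity.
    eapply cg_trans. apply cg_eq; rewrite mA'; reflexivity.
    eapply cg_trans. apply cg_mul. apply cg_eq; reflexivity. apply IHm.
    apply cg_eq; gs; reflexivity. }
  induction m; simpl. apply cg_eq; gs; reflexivity.
  eapply cg_trans. apply cg_mul. apply cg_eq; reflexivity. apply IHm.
  eapply cg_trans with (y := a ⋅ ((b ⋅ gpow G a m) ⋅ gpow G b m)). apply cg_eq; gs; reflexivity.
  eapply cg_trans. apply cg_mul. apply cg_eq; reflexivity. apply cg_mul. apply L. apply cg_eq; reflexivity.
  apply cg_eq; gs; reflexivity. Qed.
End Cong.

Fixpoint PP (n k l : nat) : gset G :=
  match l with
  | 0 => oneset G
  | S l' => prodset G (powsub G (gamma k) (Nat.pow 4 (n - k))) (PP n (S k) l')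
  end.

Lemma fold_PP n k l :
  fold_right (fun j acc => prodset G (powsub G (gamma j) (Nat.pow 4 (n - j))) acc)
             (oneset G) (seq k l) = PP n k l.
Proof. revert k; induction l; intro k; simpl. reflexivity. rewrite IHl; reflexivity. Qed.

Lemma PP_normal n k l : normal (PP n k l).
Proof. revert k; induction l; intro k; simpl. apply one_normal.
  apply prodset_normal; auto. apply powsub_normal, gamma_normal. Qed.

Lemma PP_factor n k l t : k <= t -> t < k + l ->
  incl (powsub G (gamma t) (Nat.pow 4 (n - t))) (PP n k l).
Proof. revert k; induction l; intros k H1 H2 x Hx. lia. simpl.
  destruct (Nat.eq_dec t k) as [->|Hne].
  - exists x, gone; repeat split; auto. apply sg1, PP_normal. gs; reflexivity.
  - exists gone, x; split. apply sg1, powsub_sub. split. apply IHl; auto; lia. gs; reflexivity. Qed.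

Lemma PP_min n k l (Sg : gset G) : is_subgroup G Sg ->
  (forall t, k <= t -> t < k + l -> incl (powsub G (gamma t) (Nat.pow 4 (n - t))) Sg) ->
  incl (PP n k l) Sg.
Proof. intro Ss; revert k; induction l; intros k HF x Hx; simpl in Hx.
  - rewrite Hx; apply sg1; auto.
  - destruct Hx as [a [b [Ha [Hb ->]]]]. apply sgM; auto.
    apply (HF k); auto; lia. apply (IHl (S k)); auto. intros t H1 H2; apply HF; lia. Qed.

Lemma PP_sub n k l k' l' : k <= k' -> k' + l' <= k + l -> incl (PP n k' l') (PP n k l).
Proof. intros H1 H2. apply PP_min. apply PP_normal. intros t H3 H4. apply PP_factor; lia. Qed.

Definition P k j := PP (k + j) k (S j).

Definition Cj j := forall k, 1 <= k -> forall y g, gamma k y -> P (S k) j (gcomm G (gpow G y (Nat.pow 4 j)) g).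
Definition Dj j := forall k, 1 <= k -> forall x g, P k j x -> P (S k) j (gcomm G x g).
Definition Ej j := forall k, 1 <= k -> forall x, P k j x -> P k (S j) (gpow G x 4).

Lemma C0 : Cj 0.
Proof. intros k Hk y g Hy. unfold P. apply (PP_factor _ _ _ (S k)); try lia.
  replace (S k + 0 - S k) with 0 by lia. change (Nat.pow 4 0) with 1. rewrite pow1. apply gen_incl.
  exists (gcomm G y g); split; [|rewrite pow1; reflexivity].
  rewrite gammaS by lia. apply gen_incl. exists y, g. repeat split. auto. Qed.

Lemma D_of_C j : (forall j', j' <= j -> Cj j') -> Dj j.
Proof. intros HC k Hk x g Hx. revert g.
  change ((fun x => forall g, P (S k) j (gcomm G x g)) x).
  revert x Hx. apply PP_min. apply comm_set_sub, PP_normal.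
  intros t H1 H2. apply gen_min. apply comm_set_sub, PP_normal.
  intros z [h [Hh ->]] g.
  pose proof (HC (k + j - t) ltac:(lia) t ltac:(lia) h g Hh) as HH.
  unfold P in HH. replace (S t + (k + j - t)) with (S k + j) in HH by lia.
  replace (k + j - t) with (k + j - t) in HH by lia.
  revert HH. apply PP_sub; lia. Qed.

Lemma E_of_D j : Dj j -> Ej j.
Proof. intros HD k Hk x Hx.
  pose (T := P k (S j)).
  assert (KT : incl (P (S k) j) T).
  { unfold T, P. replace (S k + j) with (k + S j) by lia. apply PP_sub; lia. }
  assert (Ss : is_subgroup G (fun x => P k j x /\ T (gpow G x 4))).
  { split; [|split].
    - split. apply sg1, PP_normal. rewrite pow_one. apply sg1, PP_normal.
    - intros a b [Ha Ta] [Hb Tb]. split. apply sgM; auto; apply PP_normal.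
      assert (Hc : cg (P (S k) j) (a ⋅ b) (b ⋅ a)).
      { unfold cg. replace (ginv (a ⋅ b) ⋅ (b ⋅ a)) with (gcomm G b a) by (unfold gcomm; gs; reflexivity).
        apply HD; auto. }
      pose proof (cg_pow _ (PP_normal _ _ _) a b Hc 4) as Hp.
      apply cg_sym in Hp; [|apply PP_normal]. unfold cg in Hp.
      replace (gpow G (a ⋅ b) 4) with ((gpow G a 4 ⋅ gpow G b 4) ⋅ (ginv (gpow G a 4 ⋅ gpow G b 4) ⋅ gpow G (a ⋅ b) 4))
        by (gs; reflexivity).
      apply sgM. apply PP_normal. apply sgM; auto; apply PP_normal. apply KT; auto.
    - intros a [Ha Ta]. split. apply sgV; auto; apply PP_normal.
      rewrite pow_inv. apply sgV; auto; apply PP_normal. }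
  refine (proj2 (PP_min _ _ _ _ Ss _ x Hx)).
  intros t H1 H2. apply gen_min; auto. intros z [h [Hh ->]]. split.
  - apply (PP_factor _ _ _ t); auto. apply gen_incl. exists h; auto.
  - rewrite <- pow_mul. unfold T, P.
    apply (PP_factor _ _ _ t); try lia. apply gen_incl. exists h; split; auto.
    replace (k + S j - t) with (S (k + j - t)) by lia. reflexivity. Qed.

Lemma C_step j : (forall j', j' <= j -> Cj j') -> Cj (S j).
Proof. intros HC. pose proof (D_of_C j HC) as HD. pose proof (E_of_D j HD) as HE.
  intros k Hk y g Hy.
  change (Nat.pow 4 (S j)) with (4 * Nat.pow 4 j). rewrite pow_mul.
  set (z := gpow G y (Nat.pow 4 j)).
  set (c := gcomm G z g).
  assert (Hc : P (S k) j c) by (apply HC; auto).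
  set (K := P (S (S k)) j).
  assert (Kn : normal K) by apply PP_normal.
  assert (Tn : normal (P (S k) (S j))) by apply PP_normal.
  assert (KT : incl K (P (S k) (S j))).
  { unfold K, P. replace (S (S k) + j) with (S k + S j) by lia. apply PP_sub; lia. }
  assert (Hzc : cg K (z ⋅ c) (c ⋅ z)).
  { unfold cg. replace (ginv (z ⋅ c) ⋅ (c ⋅ z)) with (gcomm G c z) by (unfold gcomm; gs; reflexivity).
    apply HD; auto; lia. }
  pose proof (cg_pow _ Kn z c Hzc 4) as Hp.
  apply cg_sym in Hp; auto. unfold cg in Hp.
  assert (E1 : gcomm G (gpow G z 4) g = ginv (gpow G z 4) ⋅ gpow G (z ⋅ c) 4).
  { assert (Ez : cj z g = z ⋅ c) by (unfold cj, c, gcomm; gs; reflexivity).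
    rewrite <- Ez, <- cj_pow. unfold gcomm, cj; reflexivity. }
  rewrite E1.
  replace (ginv (gpow G z 4) ⋅ gpow G (z ⋅ c) 4) with
    (gpow G c 4 ⋅ (ginv (gpow G z 4 ⋅ gpow G c 4) ⋅ gpow G (z ⋅ c) 4)) by (gs; reflexivity).
  apply sgM. apply Tn. apply HE; auto; lia. apply KT; auto. Qed.

Lemma C_all j0 : Cj j0.
Proof. assert (forall i j', j' <= i -> Cj j').
  { intro i; induction i as [|j IHj]; intros j' Hj'. replace j' with 0 by lia. apply C0.
    destruct (Nat.eq_dec j' (S j)) as [->|]. apply C_step; auto. apply IHj; lia. }
  apply (H j0 j0); lia. Qed.

Lemma main m : forall x, lambda_bar (S m) x <-> PP (S m) 1 (S m) x.
Proof. induction m; intro x.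
  - simpl. split; [intros _|intros _; exact I].
    exists x, gone. split; [|split; [reflexivity|gs; reflexivity]].
    apply gen_incl. exists x. split. exact I. change (Nat.pow 4 0) with 1. rewrite pow1; reflexivity.
  - change (lambda_bar (S (S m)) x) with
      (prodset G (powsub G (lambda_bar (S m)) 4) (commsub G (lambda_bar (S m)) (fullset G)) x).
    set (A := PP (S m) 1 (S m)).
    assert (An : normal A) by apply PP_normal.
    assert (E : forall y, prodset G (powsub G (lambda_bar (S m)) 4) (commsub G (lambda_bar (S m)) (fullset G)) y
               <-> prodset G (powsub G A 4) (commsub G A (fullset G)) y).
    { intro y; split; intros [a [b [Ha [Hb ->]]]]; exists a, b; (split; [|split; [|reflexivity]]).
      - revert Ha; apply gen_ext; intro w; split; intros [h [Hh ->]]; exists h; split; auto; apply IHm; auto.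
      - revert Hb; apply gen_ext; intro w; split; intros [h [k [Hh [Hk ->]]]]; exists h, k; split; auto; apply IHm; auto.
      - revert Ha; apply gen_ext; intro w; split; intros [h [Hh ->]]; exists h; split; auto; apply IHm; auto.
      - revert Hb; apply gen_ext; intro w; split; intros [h [k [Hh [Hk ->]]]]; exists h, k; split; auto; apply IHm; auto. }
    rewrite E. clear E.
    assert (Tn : normal (PP (S (S m)) 1 (S (S m)))) by apply PP_normal.
    split.
    + intros [a [b [Ha [Hb ->]]]]. apply sgM. apply Tn.
      * revert a Ha. apply gen_min. apply Tn. intros w [h [Hh ->]].
        apply (E_of_D m (D_of_C m (fun j' _ => C_all j')) 1 ltac:(lia) h Hh).
      * revert b Hb. apply gen_min. apply Tn. intros w [h [k [Hh [_ ->]]]].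
        pose proof (D_of_C m (fun j' _ => C_all j') 1 ltac:(lia) h k Hh) as HH.
        revert HH. unfold P. apply PP_sub; lia.
    + revert x. apply PP_min. apply prodset_sub. apply powsub_sub. apply commsub_normal; auto.
      intros t H1 H2. apply gen_min. apply prodset_sub. apply powsub_sub. apply commsub_normal; auto.
      intros w [h [Hh ->]].
      destruct (Nat.eq_dec t (S (S m))) as [->|Hne].
      * replace (S (S m) - S (S m)) with 0 by lia. change (Nat.pow 4 0) with 1. rewrite pow1.
        exists gone, h. split. apply sg1, powsub_sub. split; [|gs; reflexivity].
        revert h Hh. apply commsub_mono. intros y Hy.
        apply (PP_factor _ _ _ (S m)); try lia. replace (S m - S m) with 0 by lia.
        apply gen_incl. exists y. split; auto. change (Nat.pow 4 0) with 1. rewrite pow1; reflexivity.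
      * replace (S (S m) - t) with (S (S m - t)) by lia. change (Nat.pow 4 (S (S m - t))) with (4 * Nat.pow 4 (S m - t)).
        rewrite pow_mul. exists (gpow G (gpow G h (Nat.pow 4 (S m - t))) 4), gone.
        split; [|split; [apply sg1, commsub_normal; auto|gs; reflexivity]].
        apply gen_incl. eexists; split; [|reflexivity].
        apply (PP_factor _ _ _ t); try lia. apply gen_incl. exists h; auto. Qed.
End S.

Theorem mainTheorem8 (G : group) (n : nat) (hn : 1 <= n) :
  forall x : G, lambda_bar n x <-> N_nk n 1 x.
Proof.
  destruct n as [|m]. lia. intro x. unfold N_nk. replace (S (S m) - 1) with (S m) by lia.
  rewrite fold_PP. apply main.
Qed.
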